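(* Consider the RHC closed-loop system described in the context. Assume that $A$ is Schur stable, i.e. all eigenvalues of $A$ have modulus strictly less than $1$. Assume also that $\mathbb{E}\bigl[\bar\varphi(\bar F\bar w)\bigr]=0$ for every initial condition. Then the closed loop satisfies $$\sup_{t\in\mathbb{N}_0}\mathbb{E}_{x_0}\bigl[\|x_t\|^2\bigr]<\infty.$$
   Context: **System.** Consider the discrete-time system $x_{t+1}=Ax_t+Bu_t+Fw_t+r$ for $t\in\mathbb{N}_0$. The data are: - $x_t\in\mathbb{R}^n$, $u_t\in\mathbb{R}^m$ and $w_t\in\mathbb{R}^n$; - known matrices $A$, $B$, $F$ and a known vector $r$; - a given initial state $x_0$; - i.i.d. noise vectors $w_t$, possibly with unbounded support, with mean $\mu_w$ and finite covariance $\Sigma_w$; - the input constraint $\|u_t\|_\infty\le U_{\max}$, where $U_{\max}>0$. **Stacked notation.** Fix a horizon $N\in\mathbb{N}$. Define - $\bar x=(x_0^\mathsf{T},\dots,x_N^\mathsf{T})^\mathsf{T}$, $\bar u=(u_0^\mathsf{T},\dots,u_{N-1}^\mathsf{T})^\mathsf{T}$, $\bar w=(w_0^\mathsf{T},\dots,w_{N-1}^\mathsf{T})^\mathsf{T}$, and $\bar r=(r^\mathsf{T},\dots,r^\mathsf{T})^\mathsf{T}\in\mathbb{R}^{Nn}$; - $\bar F=\operatorname{diag}(F,\dots,F)$ and $\bar A=(I,A^\mathsf{T},\dots,(A^N)^\mathsf{T})^\mathsf{T}$; - $\bar B$ is the block matrix with blocks $A^{k-1-j}B$ for $j<k$ and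 $0$ otherwise ($k=0,\dots,N$, $j=0,\dots,N-1$); - $\bar D$ is the block matrix with blocks $A^{k-1-j}$ for $j<k$ and $0$ otherwise. Then $\bar x=\bar Ax_0+\bar B\bar u+\bar D\bar F\bar w+\bar D\bar r$. Let $Q_0,\dots,Q_N$ and $R_0,\dots,R_{N-1}$ be symmetric positive definite, and set $\bar Q=\operatorname{diag}(Q_0,\dots,Q_N)$ and $\bar R=\operatorname{diag}(R_0,\dots,R_{N-1})$. **Saturated noise measurements.** Let $0<\phi_{\max}\le U_{\max}$, and let $\varphi_i^j:\mathbb{R}\to\mathbb{R}$ ($i=0,\dots,N-1$, $j=1,\dots,n$) be functions bounded in absolute value by $\phi_{\max}$. Set $\varphi_i(Fw_i)=(\varphi_i^1(F_1w_i),\dots,\varphi_i^n(F_nw_i))^\mathsf{T}$, with $F_j$ the $j$-th row of $F$, and $\bar\varphi(\bar F\bar w)=(\varphi_0(Fw_0)^\mathsf{T},\dots,\varphi_{N-1}(Fw_{N-1})^\mathsf{T})^\mathsf{T}$. **Finite-horizon problem.** For a given initial state $x$, the finite-horizon problem is to minimize $\mathbb{E}_{x}[\bar x^\mathsf{T}\bar Q\bar x+\bar u^\mathsf{T}\bar R\bar u]$, with $x_0=x$, over policies $\bar u=\bar G\bar\varphi(\bar F\bar w)+\bar d$. Here $\bar d\in\mathbb{R}^{Nm}$, and $\bar G\in\mathbb{R}^{Nm\times Nn}$ is strictly block lower triangular with $m\times n$ blocks $G_{t,i}$ ($i<t$). The constraint is $|\bar d_i|+\|\bar G_i\|_1\phi_{\max}\le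 U_{\max}$ for $i=1,\dots,Nm$, where $\bar G_i$ is the $i$-th row of $\bar G$. **RHC closed loop.** At each time $kN$ ($k\in\mathbb{N}_0$), the finite-horizon problem is solved with initial state $x_{kN}$, giving an optimal solution $(\bar G^*_{kN},\bar d^*_{kN})$ that depends on $x_{kN}$. The whole resulting input sequence is then applied over the next $N$ steps. That is, for $\ell=0,\dots,N-1$, $$(u_{kN}^\mathsf{T},\dots,u_{kN+N-1}^\mathsf{T})^\mathsf{T}=\bar G^*_{kN}\,\bar\varphi\bigl(\bar F\,(w_{kN}^\mathsf{T},\dots,w_{kN+N-1}^\mathsf{T})^\mathsf{T}\bigr)+\bar d^*_{kN},$$ and the state evolves by $x_{t+1}=Ax_t+Bu_t+Fw_t+r$. *)

(* Defs.v *)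
From HB Require Import structures.
From mathcomp Require Import all_boot all_order all_algebra.
From mathcomp Require Import all_classical all_reals all_analysis.
From mathcomp Require complex.
Import complex.ComplexField.
Set Implicit Arguments. Unset Strict Implicit. Unset Printing Implicit Defensive.
Import Order.TTheory GRing.Theory Num.Theory.
Local Open Scope classical_set_scope.
Local Open Scope ring_scope.

Notation Cplx R := (complex.complex R).
Notation realC R := (@complex.real_complex_def R (Phant R)).

Definition schur_stable (R : realType) (n : nat) (A : 'M[R]_n) : Prop :=
  forall z : Cplx R, eigenvalue (map_mx (realC R) A) z -> `|z| < 1.

Definition sym_posdef (R : realType) (k : nat) (M : 'M[R]_k) : Prop :=
  M^T = M /\ forall v : 'cV[R]_k, v != 0 -> 0 < (v^T *m M *m v) 0 0.

Section Closedloop.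
Variables (R : realType) (n m N : nat).
Variables (A : 'M[R]_n) (B : 'M[R]_(n, m)) (F : 'M[R]_n) (r : 'cV[R]_n).

Definition gainT := 'I_N -> 'I_N -> 'M[R]_(m, n).
Definition offT := 'I_N -> 'cV[R]_m.

(* phi : i -> j -> (R -> R) is phi_i^j;  phi_i(F w) = (phi_i^j(F_j w))_j *)
Definition phivec (phi : 'I_N -> 'I_n -> R -> R) (i : 'I_N) (w : 'cV[R]_n)
  : 'cV[R]_n := \col_j phi i j ((F *m w) j 0).

Definition pol_input (phi : 'I_N -> 'I_n -> R -> R) (G : gainT) (d : offT)
  (wb : nat -> 'cV[R]_n) (k : nat) : 'cV[R]_m :=
  if (insub k : option 'I_N) is Some t then
    \sum_(s < N | (s < t)%N) G t s *m phivec phi s (wb s) + d t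
  else 0.

Fixpoint traj (x : 'cV[R]_n) (u : nat -> 'cV[R]_m) (wb : nat -> 'cV[R]_n)
  (k : nat) : 'cV[R]_n :=
  match k with
  | 0 => x
  | k'.+1 => A *m traj x u wb k' + B *m u k' + F *m wb k' + r
  end.

Definition stage_cost (phi : 'I_N -> 'I_n -> R -> R)
  (Q : 'I_N.+1 -> 'M[R]_n) (Rw : 'I_N -> 'M[R]_m)
  (x : 'cV[R]_n) (G : gainT) (d : offT) (wb : nat -> 'cV[R]_n) : R :=
  let u := pol_input phi G d wb in
  \sum_(k < N.+1) ((traj x u wb k)^T *m Q k *m traj x u wb k) 0 0
  + \sum_(k < N) ((u k)^T *m Rw k *m u k) 0 0.

Definition admissible (phimax Umax : R) (G : gainT) (d : offT) : Prop :=
  (forall t s : 'I_N, (t <= s)%N -> G t s = 0) /\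
  (forall (t : 'I_N) (a : 'I_m),
     `|d t a 0| + (\sum_(s < N) \sum_(j < n) `|G t s a j|) * phimax <= Umax).

Section Prob.
Variables (dT : measure_display) (T : measurableType dT) (P : probability T R).
Variable (w : nat -> T -> 'cV[R]_n).

Definition noise_block (k : nat) (om : T) : nat -> 'cV[R]_n :=
  fun i => w (k * N + i) om.

Definition exp_cost phi Q Rw (x : 'cV[R]_n) (G : gainT) (d : offT) : \bar R :=
  \int[P]_om (stage_cost phi Q Rw x G d (noise_block 0 om))%:E.

Definition optimal phi Q Rw phimax Umax (x : 'cV[R]_n) (Gd : gainT * offT) :=
  admissible phimax Umax Gd.1 Gd.2 /\
  forall G d, admissible phimax Umax G d ->
    (exp_cost phi Q Rw x Gd.1 Gd.2 <= exp_cost phi Q Rw x G d)%E.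

(* RHC closed loop: the state at the block start times kN *)
Fixpoint block_state phi (sol : 'cV[R]_n -> gainT * offT) (x0 : 'cV[R]_n)
  (k : nat) (om : T) : 'cV[R]_n :=
  match k with
  | 0 => x0
  | k'.+1 =>
      let x := block_state phi sol x0 k' om in
      let wb := noise_block k' om in
      traj x (pol_input phi (sol x).1 (sol x).2 wb) wb N
  end.

Definition cl_state phi sol x0 (t : nat) (om : T) : 'cV[R]_n :=
  let k := (t %/ N)%N in
  let x := block_state phi sol x0 k om in
  let wb := noise_block k om in
  traj x (pol_input phi (sol x).1 (sol x).2 wb) wb (t %% N).
End Prob.
End Closedloop.

Definition vec_event (R : realType) (dT : measure_display) (T : measurableType dT)
  (n : nat) (X : T -> 'cV[R]_n) (Bs : 'I_n -> set R) : set T :=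
  \big[setI/setT]_(j < n) ((fun om => X om j 0) @^-1` Bs j).

(* (w_t) i.i.d. random vectors in R^n (laws determined on measurable rectangles,
   a pi-system generating the Borel sets of R^n) *)
Definition iid_vectors (R : realType) (dT : measure_display) (T : measurableType dT)
  (P : probability T R) (n : nat) (w : nat -> T -> 'cV[R]_n) : Prop :=
  (forall t (j : 'I_n), measurable_fun setT (fun om => w t om j 0)) /\
  (forall (S : seq nat) (Bs : nat -> 'I_n -> set R),
     uniq S -> (forall t j, measurable (Bs t j)) ->
     P (\big[setI/setT]_(t <- S) vec_event (w t) (Bs t))
     = (\prod_(t <- S) P (vec_event (w t) (Bs t)))%E) /\
  (forall t (Bs : 'I_n -> set R), (forall j, measurable (Bs j)) ->
     P (vec_event (w t) Bs) = P (vec_event (w 0%N) Bs)).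

(* Main.v *)
Require Import Defs.
From HB Require Import structures.
From mathcomp Require Import all_boot all_order all_algebra.
From mathcomp Require Import all_classical all_reals all_analysis.
From mathcomp Require Import measurable_realfun.
From mathcomp Require Import lra.
From mathcomp Require Import complex.
Set Implicit Arguments. Unset Strict Implicit. Unset Printing Implicit Defensive.
Import Order.TTheory GRing.Theory Num.Theory.
Local Open Scope classical_set_scope.
Local Open Scope ring_scope.

Definition mn (C : numDomainType) p q (M : 'M[C]_(p,q)) : C :=
  \sum_i \sum_j `|M i j|.

Lemma mn_ge0 (C : numDomainType) p q (M : 'M[C]_(p,q)) : 0 <= mn M.
Proof. by apply: sumr_ge0 => i _; apply: sumr_ge0 => j _. Qed.

Lemma mnD (C : numDomainType) p q (M M' : 'M[C]_(p,q)) : mn (M + M') <= mn M + mn M'.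
Proof.
rewrite /mn -big_split /=; apply: ler_sum => i _.
rewrite -big_split /=; apply: ler_sum => j _; rewrite mxE; exact: ler_normD.
Qed.

Lemma mnZ (C : numDomainType) p q (l : C) (M : 'M[C]_(p,q)) : mn (l *: M) = `|l| * mn M.
Proof.
rewrite /mn mulr_sumr; apply: eq_bigr => i _; rewrite mulr_sumr; apply: eq_bigr => j _.
by rewrite mxE normrM.
Qed.

Lemma mn0 (C : numDomainType) p q : mn (0 : 'M[C]_(p,q)) = 0.
Proof. by rewrite /mn big1 // => i _; rewrite big1 // => j _; rewrite mxE normr0. Qed.

Lemma rec_summable (C : numFieldType) p q (a b : nat -> 'M[C]_(p,q)) (l Sb : C) :
  `|l| < 1 -> (forall k, a k.+1 = l *: a k + b k) ->
  (forall K, \sum_(k < K) mn (b k) <= Sb) ->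
  forall K, \sum_(k < K) mn (a k) <= (mn (a 0%N) + Sb) / (1 - `|l|).
Proof.
move=> hl ha hb K.
have h1 : \sum_(k < K) mn (a k) <= mn (a 0%N) + `|l| * \sum_(k < K) mn (a k) + Sb.
  apply: (le_trans (y := \sum_(k < K.+1) mn (a k))).
    by rewrite big_ord_recr /= lerDl mn_ge0.
  rewrite big_ord_recl /= -addrA lerD2l mulr_sumr.
  apply: (le_trans (y := \sum_(k < K) (`|l| * mn (a k) + mn (b k)))).
    apply: ler_sum => k _; rewrite /bump /= add1n ha -mnZ; exact: mnD.
  by rewrite big_split /= lerD2l; apply: hb.
have hpos : 0 < 1 - `|l| by rewrite subr_gt0.
rewrite ler_pdivlMr //.
have : \sum_(k < K) mn (a k) - `|l| * \sum_(k < K) mn (a k) <= mn (a 0%N) + Sb.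
  rewrite lerBlDr; apply: (le_trans h1); rewrite -addrA [_ * _ + _]addrC addrA.
  done.
by rewrite mulrBr mulr1 [_ * `|l|]mulrC.
Qed.

Lemma prod_summable (C : numFieldType) n' (A0 : 'M[C]_n'.+1) (s : seq C) :
  all (fun z => `|z| < 1) s ->
  forall M : 'M[C]_n'.+1, horner_mx A0 (\prod_(z <- s) ('X - z%:P)) *m M = 0 ->
  exists S, forall K, \sum_(k < K) mn (A0 ^+ k *m M) <= S.
Proof.
elim: s => [|z s IH] /=.
  move=> _ M; rewrite big_nil rmorph1 mul1mx => ->.
  by exists 0 => K; rewrite big1 // => k _; rewrite mulmx0 mn0.
move=> /andP[hz hs] M; rewrite big_cons mulrC rmorphM /= => h.
pose M' := (A0 - z%:M) *m M.
have [Sb hSb] : exists Sb, forall K, \sum_(k < K) mn (A0 ^+ k *m M') <= Sb.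
  apply: IH => //; rewrite /M' mulmxA mulmxE.
  by move: h; rewrite rmorphB /= horner_mx_X horner_mx_C mulmxE.
exists ((mn (A0 ^+ 0 *m M) + Sb) / (1 - `|z|)).
apply: (@rec_summable _ _ _ (fun k => A0 ^+ k *m M) (fun k => A0 ^+ k *m M') z Sb hz) => //.
move=> k; rewrite /M' exprSr -mulmxE -mulmxA mulmxBl mulmxBr.
by rewrite mul_scalar_mx -scalemxAr addrC subrK.
Qed.

Lemma normC_real (R : realType) (x : R) : `|realC R x| = realC R `|x|.
Proof. by rewrite complex.normc_def /= expr0n /= addr0 sqrtr_sqr. Qed.

Lemma schur_summable (R : realType) n (A : 'M[R]_n) : schur_stable A ->
  exists S : R, forall K, \sum_(k < K) mn (A ^+ k) <= S.
Proof.
case: n A => [|n'] A hA.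
  by exists 0 => K; rewrite big1 // => k _; rewrite /mn big_ord0.
pose Ac := map_mx (realC R) A.
have [s hs] := closed_field_poly_normal (char_poly Ac).
move: hs; rewrite (monicP (char_poly_monic Ac)) scale1r => hs.
have hall : all (fun z => `|z| < 1) s.
  apply/allP => z zs; apply: hA; rewrite eigenvalue_root_char hs root_prod_XsubC //.
have hCH : horner_mx Ac (\prod_(z <- s) ('X - z%:P)) *m 1%:M = 0.
  by rewrite -hs Cayley_Hamilton mul0mx.
have [S hS] := prod_summable hall hCH.
exists (complex.Re S) => K.
have hpow : forall k, Ac ^+ k = map_mx (realC R) (A ^+ k).
  elim=> [|k IH]; first by rewrite !expr0 map_mx1.
  by rewrite !exprS IH -!mulmxE map_mxM.
have := hS K.
have -> : \sum_(k < K) mn (Ac ^+ k *m 1%:M) = realC R (\sum_(k < K) mn (A ^+ k)).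
  rewrite rmorph_sum; apply: eq_bigr => k _; rewrite mulmx1 hpow /mn rmorph_sum.
  apply: eq_bigr => i _; rewrite rmorph_sum; apply: eq_bigr => j _.
  by rewrite mxE normC_real.
by rewrite complex.lecE /= => /andP[_].
Qed.

Section CL.
Variables (R : realType) (n m N : nat) (hN : (0 < N)%N).
Variables (A : 'M[R]_n) (B : 'M[R]_(n, m)) (F : 'M[R]_n) (r : 'cV[R]_n).
Variables (dT : measure_display) (T : measurableType dT).
Variables (w : nat -> T -> 'cV[R]_n) (phi : 'I_N -> 'I_n -> R -> R)
  (sol : 'cV[R]_n -> gainT R n m N * offT R m N) (x0 : 'cV[R]_n).

Definition Ucl (t : nat) (om : T) : 'cV[R]_m :=
  let k := (t %/ N)%N in
  let x := block_state A B F r w phi sol x0 k om in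
  pol_input F phi (sol x).1 (sol x).2 (noise_block N w k om) (t %% N).

Lemma cl_state0 om : cl_state A B F r w phi sol x0 0 om = x0.
Proof. by rewrite /cl_state div0n mod0n. Qed.

Lemma cl_step t om :
  cl_state A B F r w phi sol x0 t.+1 om =
  A *m cl_state A B F r w phi sol x0 t om + B *m Ucl t om + F *m w t om + r.
Proof.
rewrite /cl_state /Ucl.
have ht := divn_eq t N.
set k := (t %/ N)%N in ht *; set l := (t %% N)%N in ht *.
have hl : (l < N)%N by rewrite /l ltn_mod.
have hw : noise_block N w k om l = w t om by rewrite /noise_block ht.
case: (ltnP l.+1 N) => hl1.
  have e : t.+1 = (k * N + l.+1)%N by rewrite ht -addnS.
  have -> : (t.+1 %/ N)%N = k by rewrite e divnMDl // divn_small // addn0.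
  have -> : (t.+1 %% N)%N = l.+1 by rewrite e modnMDl modn_small.
  by rewrite /= hw.
have hlN : l.+1 = N by apply/eqP; rewrite eqn_leq hl hl1.
have e : t.+1 = (k.+1 * N)%N by rewrite ht -addnS hlN mulSn addnC.
have -> : (t.+1 %/ N)%N = k.+1 by rewrite e mulnK.
have -> : (t.+1 %% N)%N = 0%N by rewrite e modnMl.
have trS : forall x u wb j (M : nat), M = j.+1 -> traj A B F r x u wb M = A *m traj A B F r x u wb j + B *m u j + F *m wb j + r by move=> x u wb j M ->.
by rewrite /= (trS _ _ _ l N) ?hlN // hw.
Qed.

End CL.

Lemma pol_input_bound (R : realType) n m N (F : 'M[R]_n) phi (G : gainT R n m N) d
  (phimax Umax : R) wb k (a : 'I_m) :
  0 <= Umax -> 0 <= phimax -> (forall i j s, `|phi i j s| <= phimax) ->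
  admissible phimax Umax G d ->
  `|pol_input F phi G d wb k a 0| <= Umax.
Proof.
move=> hU hp hphi [_ hadm]; rewrite /pol_input.
case: insubP => [t _ _|_]; last by rewrite mxE normr0.
apply: le_trans (hadm t a); rewrite mxE summxE addrC.
apply: le_trans (ler_normD _ _) _; rewrite lerD2l mulr_suml.
apply: le_trans (ler_norm_sum _ _ _) _.
apply: (le_trans (y := \sum_(s < N) `|(G t s *m phivec F phi s (wb s)) a 0|)).
  rewrite [leRHS](bigID (fun s : 'I_N => (s < t)%N)) /= lerDl.
  by apply: sumr_ge0 => s _; exact: normr_ge0.
apply: ler_sum => s _; rewrite mxE mulr_suml.
apply: le_trans (ler_norm_sum _ _ _) _; apply: ler_sum => j _.
rewrite normrM ler_wpM2l // mxE; exact: hphi.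
Qed.

Lemma le_integral_nm (d : measure_display) (T : measurableType d) (R : realType)
  (mu : {measure set T -> \bar R}) (f g : T -> \bar R) :
  (forall x, (0 <= f x)%E) -> (forall x, (f x <= g x)%E) ->
  (\int[mu]_x f x <= \int[mu]_x g x)%E.
Proof.
move=> f0 fg.
have g0 : forall x, (0 <= g x)%E by move=> x; exact: le_trans (f0 x) (fg x).
rewrite !ge0_integralE //; apply: ereal_sup_le.
move=> _ [h hf <-]; exists h => //= x; apply: le_trans (hf x) _.
by rewrite /patch /=; case: ifP.
Qed.

Lemma same_law_sq (d : measure_display) (T : measurableType d) (R : realType)
  (P : probability T R) (X Y : T -> R) :
  measurable_fun setT X -> measurable_fun setT Y ->
  (forall B : set R, measurable B -> P (X @^-1` B) = P (Y @^-1` B)) ->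
  (\int[P]_om ((X om)^+2)%:E = \int[P]_om ((Y om)^+2)%:E)%E.
Proof.
move=> mX mY hXY.
have mf : measurable_fun [set: R] (EFin \o (fun y : R => y ^+ 2)).
  by apply/measurable_EFinP; exact: exprn_measurable.
have f0 : {in setT, forall y : R, (0 <= (y ^+ 2)%:E)%E}.
  by move=> y _; rewrite lee_fin sqr_ge0.
have eX := ge0_integral_pushforward mX P measurableT mf f0.
have eY := ge0_integral_pushforward mY P measurableT mf f0.
rewrite preimage_setT in eX; rewrite preimage_setT in eY.
rewrite -[LHS]eX -[RHS]eY; apply: eq_measure_integral => B mB _.
exact: hXY.
Qed.

Lemma vec_event1 (R : realType) (d : measure_display) (T : measurableType d) n
  (X : T -> 'cV[R]_n) (j : 'I_n) (B : set R) :
  vec_event X (fun j' => if j' == j then B else setT) = (fun om => X om j 0) @^-1` B.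
Proof.
rewrite /vec_event (bigD1 j) //= eqxx big1 ?setIT // => j' /negbTE ->.
by rewrite preimage_setT.
Qed.

Lemma iid_sq (R : realType) (d : measure_display) (T : measurableType d)
  (P : probability T R) n (w : nat -> T -> 'cV[R]_n) t (j : 'I_n) :
  iid_vectors P w ->
  (\int[P]_om ((w t om j 0)^+2)%:E = \int[P]_om ((w 0%N om j 0)^+2)%:E)%E.
Proof.
move=> [hm [_ hid]]; apply: same_law_sq; [exact: hm|exact: hm|].
move=> B mB; rewrite -!vec_event1; apply: hid => j'.
by case: ifP.
Qed.

Lemma cs_ineq (R : realType) K (c y : 'I_K -> R) : (forall i, 0 <= c i) ->
  (\sum_i c i * y i) ^+ 2 <= (\sum_i c i) * (\sum_i c i * y i ^+ 2).
Proof.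
move=> c0.
have e1 : (\sum_i c i * y i) ^+ 2 = \sum_i \sum_j (c i * c j) * (y i * y j).
  rewrite expr2 mulr_suml; apply: eq_bigr => i _; rewrite mulr_sumr.
  by apply: eq_bigr => j _; rewrite mulrACA.
have e2 : (\sum_i c i) * (\sum_i c i * y i ^+ 2) = \sum_i \sum_j (c i * c j) * (y j ^+ 2).
  rewrite mulr_suml; apply: eq_bigr => i _; rewrite mulr_sumr.
  by apply: eq_bigr => j _; rewrite mulrA.
have e3 : (\sum_i c i) * (\sum_i c i * y i ^+ 2) = \sum_i \sum_j (c i * c j) * (y i ^+ 2).
  rewrite e2 exchange_big /=; apply: eq_bigr => i _; apply: eq_bigr => j _.
  by rewrite [c j * _]mulrC.
suff : 2 * (\sum_i c i * y i) ^+ 2 <= 2 * ((\sum_i c i) * (\sum_i c i * y i ^+ 2)).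
  by rewrite ler_pM2l.
rewrite !mulr_natl !mulr2n {1}e2 e3 e1 -!big_split /=.
apply: ler_sum => i _; rewrite -!big_split /=; apply: ler_sum => j _.
have := c0 i; have := c0 j => hj hi.
have h : 0 <= c i * c j by exact: mulr_ge0.
rewrite -!mulrDr; apply: ler_wpM2l => //.
have := sqr_ge0 (y i - y j); clear e1 e2 e3; nra.
Qed.

Lemma sq_sum_le (R : realType) K (y : 'I_K -> R) :
  (\sum_i y i) ^+ 2 <= K%:R * \sum_i y i ^+ 2.
Proof.
have := @cs_ineq R K (fun _ => 1) y (fun _ => ler01).
rewrite sumr_const card_ord.
under eq_bigr do rewrite mul1r. under [X in _ <= _ * X]eq_bigr do rewrite mul1r.
by [].
Qed.

Lemma lin_formula (R : realType) n (A : 'M[R]_n) (x v : nat -> 'cV[R]_n) :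
  (forall t, x t.+1 = A *m x t + v t) ->
  forall t, x t = A ^+ t *m x 0%N + \sum_(s < t) A ^+ (t - s.+1) *m v s.
Proof.
move=> hx; elim=> [|t IH]; first by rewrite expr0 mul1mx big_ord0 addr0.
rewrite hx IH big_ord_recr /= subnn expr0 mul1mx mulmxDr addrA mulmxA mulmxE -exprS.
congr (_ + _ + _); rewrite mulmx_sumr; apply: eq_bigr => s _.
rewrite mulmxA mulmxE -exprS subSS subnSK //.
Qed.

Lemma mn_mul (R : realType) p q k (M : 'M[R]_(p,q)) (v : 'M[R]_(q,k)) :
  mn (M *m v) <= mn M * mn v.
Proof.
rewrite /mn mulr_suml; apply: ler_sum => i _.
apply: (le_trans (y := \sum_(j < k) \sum_(l < q) `|M i l| * `|v l j|)).
  apply: ler_sum => j _; rewrite mxE; apply: le_trans (ler_norm_sum _ _ _) _.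
  by apply: ler_sum => l _; rewrite normrM.
rewrite exchange_big mulr_suml /=; apply: ler_sum => l _.
rewrite -mulr_sumr; apply: ler_wpM2l => //.
rewrite (bigD1 l) //= lerDl; apply: sumr_ge0 => l' _; apply: sumr_ge0 => j _; exact: normr_ge0.
Qed.

Lemma mn_sum (R : realType) p q K (M : 'I_K -> 'M[R]_(p,q)) :
  mn (\sum_(s < K) M s) <= \sum_(s < K) mn (M s).
Proof.
elim: K M => [|K IH] M; first by rewrite !big_ord0 mn0.
rewrite !big_ord_recr /=; apply: le_trans (mnD _ _) _; rewrite lerD2r; exact: IH.
Qed.

Lemma mn_col (R : realType) p (v : 'cV[R]_p) : mn v = \sum_j `|v j 0|.
Proof. by apply: eq_bigr => j _; rewrite big_ord1. Qed.

Lemma sumsq_le (R : realType) K (y : 'I_K -> R) : (forall i, 0 <= y i) ->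
  \sum_i y i ^+ 2 <= (\sum_i y i) ^+ 2.
Proof.
move=> y0; rewrite [leRHS]expr2 mulr_suml; apply: ler_sum => i _.
rewrite expr2 ler_wpM2l // (bigD1 i) //= lerDl; exact: sumr_ge0.
Qed.

Lemma sum_le_S (R : realType) (c : nat -> R) S t : (forall k, 0 <= c k) ->
  (forall K, \sum_(k < K) c k <= S) -> \sum_(s < t) c (t - s.+1)%N <= S.
Proof.
move=> c0 hS; apply: le_trans (hS t).
rewrite (reindex_inj rev_ord_inj) /=; rewrite le_eqVlt; apply/orP; left; apply/eqP; apply: eq_bigr => s _.
by rewrite subnSK // subKn // ltnW.
Qed.

Lemma term_le_S (R : realType) (c : nat -> R) S t : (forall k, 0 <= c k) ->
  (forall K, \sum_(k < K) c k <= S) -> c t <= S.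
Proof.
move=> c0 hS; apply: le_trans (hS t.+1).
rewrite big_ord_recr /= lerDr; exact: sumr_ge0.
Qed.

Lemma pointwise (R : realType) n m (A : 'M[R]_n) (B : 'M[R]_(n,m)) (F : 'M[R]_n) r
  (x : nat -> 'cV[R]_n) (U : nat -> 'cV[R]_m) (wv : nat -> 'cV[R]_n) (S Umax : R) :
  0 <= Umax ->
  (forall t, x t.+1 = A *m x t + B *m U t + F *m wv t + r) ->
  (forall t a, `|U t a 0| <= Umax) ->
  (forall K, \sum_(k < K) mn (A ^+ k) <= S) ->
  forall t, \sum_j (x t j 0) ^+ 2 <=
    2 * (S * (mn (x 0%N) + (mn B * (m%:R * Umax) + mn r))) ^+ 2 +
    2 * (mn F) ^+ 2 * S * n%:R *
      \sum_(s < t) mn (A ^+ (t - s.+1)) * \sum_j (wv s j 0) ^+ 2.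
Proof.
move=> hU0 hx hU hS t.
set K0 := mn B * (m%:R * Umax) + mn r.
set a := S * (mn (x 0%N) + K0).
set f := mn F.
set c := fun k => mn (A ^+ k).
have c0 : forall k, 0 <= c k by move=> k; exact: mn_ge0.
have S0 : 0 <= S by apply: le_trans (hS 0%N); rewrite big_ord0.
have K00 : 0 <= K0 by rewrite /K0 addr_ge0 ?mn_ge0 // mulr_ge0 ?mn_ge0 // mulr_ge0.
have f0 : 0 <= f by exact: mn_ge0.
set y := fun s => mn (wv s).
have y0 : forall s, 0 <= y s by move=> s; exact: mn_ge0.
set Y := \sum_(s < t) c (t - s.+1)%N * y s.
have Y0 : 0 <= Y by apply: sumr_ge0 => s _; exact: mulr_ge0.
have hv : forall s, mn (B *m U s + F *m wv s + r) <= K0 + f * y s.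
  move=> s; apply: le_trans (mnD _ _) _.
  apply: le_trans (lerD (mnD _ _) (lexx _)) _.
  rewrite /K0 addrAC; apply: lerD; last exact: mn_mul.
  rewrite lerD2r; apply: le_trans (mn_mul _ _) _; apply: ler_wpM2l; first exact: mn_ge0.
  rewrite mn_col mulr_natl -[m in Umax *+ m]card_ord -sumr_const; apply: ler_sum => i _; exact: hU.
have hx' : forall t, x t.+1 = A *m x t + (B *m U t + F *m wv t + r).
  by move=> t'; rewrite hx !addrA.
have hmx : mn (x t) <= a + f * Y.
  rewrite (lin_formula hx' t); apply: le_trans (mnD _ _) _.
  apply: le_trans (lerD (mn_mul _ _) (mn_sum _)) _.
  apply: (le_trans (y := c t * mn (x 0%N) + \sum_(s < t) c (t - s.+1)%N * (K0 + f * y s))).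
    rewrite lerD2l; apply: ler_sum => s _; apply: le_trans (mn_mul _ _) _.
    by apply: ler_wpM2l; [exact: c0|exact: hv].
  rewrite /a /Y mulrDr -addrA; apply: lerD.
    by apply: ler_wpM2r; [exact: mn_ge0|exact: term_le_S].
  under eq_bigr do rewrite mulrDr.
  rewrite big_split /= mulr_sumr; apply: lerD.
    rewrite -mulr_suml; apply: ler_wpM2r => //; exact: sum_le_S.
  by apply: ler_sum => s _; rewrite mulrCA.
have hsq : \sum_j (x t j 0) ^+ 2 <= (mn (x t)) ^+ 2.
  rewrite mn_col; apply: le_trans (sumsq_le _) => [|j]; last exact: normr_ge0.
  by apply: ler_sum => j _; rewrite real_normK // num_real.
have hY : Y ^+ 2 <= S * \sum_(s < t) c (t - s.+1)%N * y s ^+ 2.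
  apply: (le_trans (@cs_ineq R t (fun s : 'I_t => c (t - s.+1)%N) (fun s : 'I_t => y s) (fun s => c0 _))) => /=.
  apply: ler_wpM2r; last exact: sum_le_S.
  by apply: sumr_ge0 => s _; rewrite mulr_ge0 // sqr_ge0.
have hy : forall s, y s ^+ 2 <= n%:R * \sum_j (wv s j 0) ^+ 2.
  move=> s; rewrite /y mn_col; apply: le_trans (sq_sum_le _) _.
  by rewrite ler_wpM2l // le_eqVlt; apply/orP; left; apply/eqP; apply: eq_bigr => j _; rewrite real_normK // num_real.
apply: le_trans hsq _.
have hma : (mn (x t)) ^+ 2 <= (a + f * Y) ^+ 2.
  by rewrite ler_sqr ?nnegrE ?mn_ge0 //; apply: le_trans hmx; exact: mn_ge0.
apply: le_trans hma _.
have h2 : (a + f * Y) ^+ 2 <= 2 * a ^+ 2 + 2 * f ^+ 2 * Y ^+ 2.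
  have gen : forall u v : R, (u + v) ^+ 2 <= 2 * u ^+ 2 + 2 * v ^+ 2 by move=> u v; have := sqr_ge0 (u - v); rewrite !expr2; nra.
  by rewrite -mulrA -exprMn; exact: gen.
apply: le_trans h2 _; rewrite lerD2l -!mulrA; apply: ler_wpM2l => //.
do 2 apply: ler_wpM2l => //.
apply: le_trans hY _; apply: ler_wpM2l => //.
rewrite mulr_sumr; apply: ler_sum => s _; rewrite [leRHS]mulrCA; apply: ler_wpM2l; first exact: c0.
exact: hy.
Qed.

Lemma int_lin (d : measure_display) (T : measurableType d) (R : realType)
  (P : probability T R) K (c : 'I_K -> R) (h : 'I_K -> T -> R) (H : 'I_K -> R) (al be : R) :
  0 <= al -> 0 <= be -> (forall s, 0 <= c s) -> (forall s om, 0 <= h s om) ->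
  (forall s, measurable_fun setT (h s)) ->
  (forall s, \int[P]_om (h s om)%:E = (H s)%:E)%E ->
  (\int[P]_om (al + be * \sum_s c s * h s om)%:E = (al + be * \sum_s c s * H s)%:E)%E.
Proof.
move=> al0 be0 c0 h0 mh hH.
have mS : measurable_fun setT (fun om => \sum_s c s * h s om).
  apply: measurable_sum => s; apply: measurable_funM => //; exact: measurable_cst.
have S0 : forall om, 0 <= \sum_s c s * h s om.
  by move=> om; apply: sumr_ge0 => s _; apply: mulr_ge0.
under eq_integral do rewrite EFinD.
rewrite ge0_integralD //; last 2 first.
- by move=> om _; rewrite lee_fin mulr_ge0.
- by apply/measurable_EFinP; apply: measurable_funM => //; exact: measurable_cst.
rewrite integral_cst //.
rewrite [X in (_ * X + _)%E](_ : _ = 1%E); last exact: probability_setT.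
rewrite mule1.
under eq_integral do rewrite EFinM.
rewrite ge0_integralZl_EFin //; last 2 first.
- by move=> om _; rewrite lee_fin.
- by apply/measurable_EFinP.
rewrite EFinD EFinM; congr (_ + _ * _)%E.
under eq_integral do rewrite -sumEFin.
rewrite ge0_integral_sum //; last 2 first.
- by move=> s; apply/measurable_EFinP; apply: measurable_funM => //; exact: measurable_cst.
- by move=> s om _; rewrite lee_fin mulr_ge0.
rewrite -sumEFin; apply: eq_bigr => s _.
under eq_integral do rewrite EFinM.
rewrite ge0_integralZl_EFin //; last 2 first.
- by move=> om _; rewrite lee_fin.
- by apply/measurable_EFinP.
by rewrite hH.
Qed.

Unset Implicit Arguments.

Theorem proposition4
  (R : realType) (n m N : nat) (hN : (0 < N)%N)
  (A : 'M[R]_n) (B : 'M[R]_(n, m)) (F : 'M[R]_n) (r : 'cV[R]_n) (x0 : 'cV[R]_n)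
  (dT : measure_display) (T : measurableType dT) (P : probability T R)
  (w : nat -> T -> 'cV[R]_n) (mu_w : 'cV[R]_n) (Sigma_w : 'M[R]_n)
  (Umax phimax : R) (phi : 'I_N -> 'I_n -> R -> R)
  (Q : 'I_N.+1 -> 'M[R]_n) (Rw : 'I_N -> 'M[R]_m)
  (sol : 'cV[R]_n -> gainT R n m N * offT R m N) :
  (* noise: i.i.d. with mean mu_w and finite covariance Sigma_w *)
  iid_vectors P w ->
  (forall t (j : 'I_n), P.-integrable setT (fun om => (w t om j 0)%:E)) ->
  (forall t (j : 'I_n), P.-integrable setT (fun om => ((w t om j 0) ^+ 2)%:E)) ->
  (forall j : 'I_n, \int[P]_om (w 0%N om j 0)%:E = (mu_w j 0)%:E)%E ->
  (forall j k : 'I_n,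
     \int[P]_om ((w 0%N om j 0 - mu_w j 0) * (w 0%N om k 0 - mu_w k 0))%:E
     = (Sigma_w j k)%:E)%E ->
  (* input bound and saturation functions *)
  0 < Umax -> 0 < phimax -> phimax <= Umax ->
  (forall i j, measurable_fun setT (phi i j)) ->
  (forall i j (s : R), `|phi i j s| <= phimax) ->
  (* weights *)
  (forall k, sym_posdef (Q k)) -> (forall k, sym_posdef (Rw k)) ->
  (* optimal solution of the finite-horizon problem for every initial state *)
  (forall x, optimal A B F r P w phi Q Rw phimax Umax x (sol x)) ->
  (* standing assumptions of the proposition *)
  schur_stable A ->
  (forall (i : 'I_N) (j : 'I_n), (\int[P]_om (phi i j ((F *m w i om) j 0))%:E = 0)%E) ->
  (ereal_sup (range (fun t : nat =>
      \int[P]_om (\sum_(j < n) (cl_state A B F r w phi sol x0 t om j 0) ^+ 2)%:E))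
   < +oo)%E.
Proof.
move=> hiid _ hint2 _ _ hU0 hp0 _ _ hphib _ _ hopt hschur _.
have [S hS] := schur_summable hschur.
have hU0' : 0 <= Umax := ltW hU0.
have hp0' : 0 <= phimax := ltW hp0.
have hUb : forall t om a, `|Ucl A B F r w phi sol x0 t om a 0| <= Umax.
  move=> t om a; rewrite /Ucl; apply: pol_input_bound; [exact: hU0'|exact: hp0'|exact: hphib|exact: (hopt _).1].
have hpt := fun om => @pointwise R n m A B F r
  (fun t => cl_state A B F r w phi sol x0 t om)
  (fun t => Ucl A B F r w phi sol x0 t om) (fun s => w s om) S Umax hU0'
  (fun t => cl_step hN A B F r w phi sol x0 t om) (fun t => hUb t om) hS.
pose e := fun j : 'I_n => fine (\int[P]_om ((w 0%N om j 0) ^+ 2)%:E).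
have mW : forall s (j : 'I_n), measurable_fun setT (fun om => (w s om j 0) ^+ 2).
  by move=> s j; apply: measurable_funX; exact: hiid.1.
have he : forall s (j : 'I_n), (\int[P]_om ((w s om j 0) ^+ 2)%:E = (e j)%:E)%E.
  move=> s j; rewrite iid_sq // /e fineK //; exact: integrable_fin_num (hint2 0%N j).
have e0 : forall j, 0 <= e j.
  by move=> j; rewrite /e fine_ge0 // integral_ge0 // => om _; rewrite lee_fin sqr_ge0.
have hW : forall s, (\int[P]_om (\sum_j (w s om j 0) ^+ 2)%:E = (\sum_j e j)%:E)%E.
  move=> s; under eq_integral do rewrite -sumEFin.
  rewrite ge0_integral_sum //; last 2 first.
  - by move=> j; apply/measurable_EFinP; exact: mW.
  - by move=> j om _; rewrite lee_fin sqr_ge0.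
  by rewrite -sumEFin; apply: eq_bigr => j _; exact: he.
set E := \sum_j e j.
have E0 : 0 <= E by apply: sumr_ge0 => j _.
set al := 2 * (S * (mn x0 + (mn B * (m%:R * Umax) + mn r))) ^+ 2.
set be := 2 * (mn F) ^+ 2 * S * n%:R.
have S0 : 0 <= S by apply: le_trans (hS 0%N); rewrite big_ord0.
have be0 : 0 <= be by rewrite /be !mulr_ge0 // ?sqr_ge0 ?mn_ge0.
have key : forall t, (\int[P]_om (\sum_(j < n) (cl_state A B F r w phi sol x0 t om j 0) ^+ 2)%:E
    <= (al + be * (S * E))%:E)%E.
  move=> t.
  apply: le_trans (le_integral_nm P (g := fun om => (al + be * \sum_(s < t)
      mn (A ^+ (t - s.+1)) * \sum_j (w s om j 0) ^+ 2)%:E) _ _) _.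
  - by move=> om; rewrite lee_fin; apply: sumr_ge0 => j _; exact: sqr_ge0.
  - move=> om; rewrite lee_fin; have := hpt om t; rewrite /= cl_state0 -mulrA //.
  rewrite (int_lin (P := P) (c := fun s : 'I_t => mn (A ^+ (t - s.+1)))
    (h := fun (s : 'I_t) om => \sum_j (w s om j 0) ^+ 2) (H := fun _ => E)) //; last first.
  - by move=> s; apply: measurable_sum => j; exact: mW.
  - by move=> s om; apply: sumr_ge0 => j _; exact: sqr_ge0.
  - by move=> s; exact: mn_ge0.
  - by rewrite /al mulr_ge0 // sqr_ge0.
  rewrite lee_fin lerD2l; apply: ler_wpM2l => //.
  rewrite -mulr_suml; apply: ler_wpM2r => //.
  by apply: (sum_le_S (c := fun k => mn (A ^+ k))) => // k; exact: mn_ge0.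
apply: (@le_lt_trans _ _ (al + be * (S * E))%:E); last exact: ltey.
by apply: ub_ereal_sup => _ [t _ <-]; exact: key.
Qed.
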